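(* Let $\xi\in\mathscr C^1([0,2\pi])$ be increasing with $\xi(2\pi)=\xi(0)+2\pi$ (so that $\xi(\theta)-\theta$ extends to a $2\pi$-periodic $\mathscr C^1$ function). Then $$\int_0^{2\pi}\!\!\int_0^{2\pi}\frac{1-\cos[\xi(\theta)-\xi(\phi)]}{1-\cos(\theta-\phi)}\,\big(\xi'(\theta)-1\big)\,d\theta\,d\phi\;\geqslant0,$$ with equality if and only if $\xi(\theta)=\theta+\mathrm{const}$. *)

(* Defs.v *)
From Stdlib Require Import Reals.
Open Scope R_scope.

Definition in_I (x : R) : Prop := 0 <= x <= 2 * PI.

Definition cont_on_I (f : R -> R) : Prop :=
  forall x, in_I x -> limit1_in f in_I (f x) x.

(* [xi] is C^1 on [0,2PI] with derivative [dxi]: xi is continuous on [0,2PI],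
   differentiable on (0,2PI) with derivative dxi, and dxi extends continuously
   to [0,2PI] (so dxi at the endpoints is the one-sided derivative). *)
Definition C1_on_I (xi dxi : R -> R) : Prop :=
  cont_on_I xi /\
  (forall x, 0 < x < 2 * PI -> derivable_pt_lim xi x (dxi x)) /\
  cont_on_I dxi.

Definition has_integral (f : R -> R) (a b v : R) : Prop :=
  exists pr : Riemann_integrable f a b, RiemannInt pr = v.

Definition kernel5p3 (xi dxi : R -> R) (theta phi : R) : R :=
  (1 - cos (xi theta - xi phi)) / (1 - cos (theta - phi)) * (dxi theta - 1).

(* Main.v *)
Require Import Defs.
From Stdlib Require Import Reals Lra Lia Psatz Classical ClassicalEpsilon RList.
Open Scope R_scope.

Definition relcont (f : R -> R) (a b x : R) : Prop :=
  forall eps, 0 < eps -> exists del, 0 < del /\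
    forall y, a <= y <= b -> Rabs (y - x) < del -> Rabs (f y - f x) < eps.

Definition clamp (a b x : R) : R := Rmax a (Rmin b x).

Lemma clamp_in a b x : a <= b -> a <= clamp a b x <= b.
Proof. intros; unfold clamp, Rmax, Rmin; repeat destruct Rle_dec; lra. Qed.

Lemma clamp_id a b x : a <= x <= b -> clamp a b x = x.
Proof. intros; unfold clamp, Rmax, Rmin; repeat destruct Rle_dec; lra. Qed.

Lemma clamp_lip a b x y : a <= b -> Rabs (clamp a b x - clamp a b y) <= Rabs (x - y).
Proof.
  intros; unfold clamp, Rmax, Rmin; repeat destruct Rle_dec;
  unfold Rabs; repeat destruct Rcase_abs; lra.
Qed.

Lemma relcont_clamp f a b x : a <= b -> a <= x <= b -> relcont f a b x ->
  continuity_pt (fun t => f (clamp a b t)) x.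
Proof.
  intros Hab Hx H eps Heps.
  destruct (H eps Heps) as [del [Hd H']].
  exists del; split; [lra|].
  intros y [_ Hy]. simpl in *. unfold R_dist in *.
  rewrite (clamp_id a b x Hx).
  apply H'. apply clamp_in; auto.
  eapply Rle_lt_trans; [|apply Hy].
  rewrite <- (clamp_id a b x Hx) at 1. apply clamp_lip; auto.
Qed.

Lemma cont_relcont f a b x : continuity_pt f x -> relcont f a b x.
Proof.
  intros H eps Heps. destruct (H eps Heps) as [del [Hd H']].
  exists del; split; [lra|]. intros y _ Hy.
  destruct (Req_dec y x) as [->|Hne]. { rewrite Rminus_diag, Rabs_R0; lra. }
  simpl in H'. unfold R_dist in H'. apply (H' y). split; [split; [constructor|auto]| exact Hy].
Qed.

Lemma rc_int f a b : a <= b -> (forall x, a <= x <= b -> relcont f a b x) ->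
  Riemann_integrable f a b.
Proof.
  intros Hab H.
  apply Riemann_integrable_ext with (f := fun t => f (clamp a b t)).
  - intros x Hx. rewrite Rmin_left, Rmax_right in Hx by lra. rewrite clamp_id; auto.
  - apply continuity_implies_RiemannInt; auto.
    intros x Hx. apply relcont_clamp; auto.
Qed.

Lemma RI_zero_open d a b : a <= b -> (forall x, a < x < b -> d x = 0) ->
  Riemann_integrable d a b.
Proof.
  intros Hab H. destruct (Req_EM_T a b) as [<-|Hne].
  { apply RiemannInt_P7. }
  assert (Hlt : a < b) by lra.
  assert (Hs : IsStepFun d a b).
  { exists (cons a (cons b nil)). exists (cons 0 nil).
    unfold adapted_couple. rewrite Rmin_left, Rmax_right by lra.
    repeat split.
    - unfold ordered_Rlist. intros i Hi. simpl in Hi.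
      assert (i = 0%nat) by lia. subst. simpl. lra.
    - intros i Hi. simpl in Hi. assert (i = 0%nat) by lia. subst. simpl.
      unfold constant_D_eq, open_interval. intros x Hx. apply H; auto. }
  intro eps. exists (mkStepFun Hs). exists (mkStepFun (StepFun_P4 a b 0)).
  split.
  - intros t _. simpl. unfold fct_cte. rewrite Rminus_diag, Rabs_R0. lra.
  - rewrite StepFun_P18. rewrite Rmult_0_l, Rabs_R0. apply cond_pos.
Qed.

Lemma RI_open_ext f g a b : a <= b -> (forall x, a < x < b -> f x = g x) ->
  Riemann_integrable f a b -> Riemann_integrable g a b.
Proof.
  intros Hab H Hf.
  assert (Hd : Riemann_integrable (fun x => g x - f x) a b).
  { apply RI_zero_open; auto. intros x Hx. rewrite H; auto. ring. }
  apply Riemann_integrable_ext with (f := fun x => f x + 1 * (g x - f x)).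
  - intros; ring.
  - apply RiemannInt_P10; auto.
Qed.

Lemma RI_pt_ext f g a b c : a <= b ->
  (forall x, a < x < b -> x <> c -> f x = g x) ->
  Riemann_integrable f a b -> Riemann_integrable g a b.
Proof.
  intros Hab H Hf.
  destruct (Rlt_dec a c) as [Hac|Hac]; [destruct (Rlt_dec c b) as [Hcb|Hcb]|].
  - apply RiemannInt_P21 with c; try lra.
    + apply RI_open_ext with f; try lra.
      * intros x Hx; apply H; lra.
      * apply RiemannInt_P22 with b; auto; lra.
    + apply RI_open_ext with f; try lra.
      * intros x Hx; apply H; lra.
      * apply RiemannInt_P23 with a; auto; lra.
  - apply RI_open_ext with f; auto. intros x Hx; apply H; lra.
  - apply RI_open_ext with f; auto. intros x Hx; apply H; lra.
Qed.

Lemma RI_pt_eq f g a b c (pr1 : Riemann_integrable f a b) (pr2 : Riemann_integrable g a b) :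
  a <= b -> (forall x, a < x < b -> x <> c -> f x = g x) ->
  RiemannInt pr1 = RiemannInt pr2.
Proof.
  intros Hab H.
  destruct (Rlt_dec a c) as [Hac|Hac]; [destruct (Rlt_dec c b) as [Hcb|Hcb]|].
  - assert (p1 : Riemann_integrable f a c) by (apply RiemannInt_P22 with b; auto; lra).
    assert (p2 : Riemann_integrable f c b) by (apply RiemannInt_P23 with a; auto; lra).
    assert (q1 : Riemann_integrable g a c) by (apply RiemannInt_P22 with b; auto; lra).
    assert (q2 : Riemann_integrable g c b) by (apply RiemannInt_P23 with a; auto; lra).
    rewrite <- (RiemannInt_P26 p1 p2 pr1), <- (RiemannInt_P26 q1 q2 pr2).
    f_equal; apply RiemannInt_P18; try lra; intros x Hx; apply H; lra.
  - apply RiemannInt_P18; auto. intros x Hx; apply H; lra.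
  - apply RiemannInt_P18; auto. intros x Hx; apply H; lra.
Qed.

Lemma RI_ge_const f a b c (pr : Riemann_integrable f a b) : a <= b ->
  (forall x, a < x < b -> c <= f x) -> c * (b - a) <= RiemannInt pr.
Proof.
  intros Hab H. rewrite <- (RiemannInt_P15 (RiemannInt_P14 a b c)).
  apply RiemannInt_P19; auto.
Qed.

Lemma RI_le_const f a b c (pr : Riemann_integrable f a b) : a <= b ->
  (forall x, a < x < b -> f x <= c) -> RiemannInt pr <= c * (b - a).
Proof.
  intros Hab H. rewrite <- (RiemannInt_P15 (RiemannInt_P14 a b c)).
  apply RiemannInt_P19; auto.
Qed.

Lemma RI_abs_le f a b c (pr : Riemann_integrable f a b) : a <= b ->
  (forall x, a < x < b -> Rabs (f x) <= c) -> Rabs (RiemannInt pr) <= c * (b - a).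
Proof.
  intros Hab H. apply Rabs_le. split.
  - replace (- (c * (b - a))) with ((- c) * (b - a)) by ring.
    apply RI_ge_const; auto. intros x Hx. generalize (H x Hx); unfold Rabs; destruct Rcase_abs; lra.
  - apply RI_le_const; auto. intros x Hx. generalize (H x Hx); unfold Rabs; destruct Rcase_abs; lra.
Qed.

Lemma RI_pos_pt f a b x0 (pr : Riemann_integrable f a b) :
  a < x0 < b -> (forall x, a < x < b -> 0 <= f x) -> relcont f a b x0 ->
  0 < f x0 -> 0 < RiemannInt pr.
Proof.
  intros Hx0 Hpos Hc Hf.
  destruct (Hc (f x0 / 2)) as [del [Hd Hdel]]; [lra|].
  set (e := Rmin del (Rmin (x0 - a) (b - x0)) / 2).
  assert (He : 0 < e).
  { unfold e. apply Rmult_lt_0_compat; [|lra]. repeat apply Rmin_pos; lra. }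
  assert (He1 : e < del) by (unfold e; generalize (Rmin_l del (Rmin (x0 - a) (b - x0))); lra).
  assert (He2 : e < x0 - a) by (unfold e; generalize (Rmin_r del (Rmin (x0 - a) (b - x0))) (Rmin_l (x0 - a) (b - x0)); lra).
  assert (He3 : e < b - x0) by (unfold e; generalize (Rmin_r del (Rmin (x0 - a) (b - x0))) (Rmin_r (x0 - a) (b - x0)); lra).
  assert (p1 : Riemann_integrable f a (x0 - e)) by (apply RiemannInt_P22 with b; auto; lra).
  assert (p23 : Riemann_integrable f (x0 - e) b) by (apply RiemannInt_P23 with a; auto; lra).
  assert (p2 : Riemann_integrable f (x0 - e) (x0 + e)) by (apply RiemannInt_P22 with b; auto; lra).
  assert (p3 : Riemann_integrable f (x0 + e) b) by (apply RiemannInt_P23 with (x0 - e); auto; lra).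
  rewrite <- (RiemannInt_P26 p1 p23 pr), <- (RiemannInt_P26 p2 p3 p23).
  assert (I1 : 0 * (x0 - e - a) <= RiemannInt p1).
  { apply RI_ge_const; [lra|]. intros; apply Hpos; lra. }
  assert (I3 : 0 * (b - (x0 + e)) <= RiemannInt p3).
  { apply RI_ge_const; [lra|]. intros; apply Hpos; lra. }
  assert (I2 : (f x0 / 2) * (x0 + e - (x0 - e)) <= RiemannInt p2).
  { apply RI_ge_const; [lra|]. intros x Hx.
    assert (Hb : Rabs (f x - f x0) < f x0 / 2) by (apply Hdel; [lra| apply Rabs_def1; lra]).
    apply Rabs_def2 in Hb. lra. }
  assert (0 < (f x0 / 2) * (x0 + e - (x0 - e))) by (apply Rmult_lt_0_compat; lra).
  lra.
Qed.

Lemma MVT_open f f' a b : a < b ->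
  (forall c, a < c < b -> derivable_pt_lim f c (f' c)) ->
  (forall c, a <= c <= b -> continuity_pt f c) ->
  exists c, a < c < b /\ f b - f a = f' c * (b - a).
Proof.
  intros Hab Hd Hc.
  set (pr1 := fun c (P : a < c < b) => exist (fun l => derivable_pt_lim f c l) (f' c) (Hd c P)).
  set (pr2 := fun c (P : a < c < b) => derivable_pt_id c).
  destruct (MVT f id a b pr1 pr2 Hab Hc) as [c [P HP]].
  { intros c _. apply derivable_continuous_pt, derivable_pt_id. }
  exists c; split; auto.
  unfold pr2 in HP. rewrite derive_pt_id in HP. simpl in HP. unfold id in HP. lra.
Qed.

Lemma dpl_local f g x l r : 0 < r -> (forall y, Rabs (y - x) < r -> f y = g y) ->
  derivable_pt_lim f x l -> derivable_pt_lim g x l.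
Proof.
  intros Hr Hfg H eps Heps. destruct (H eps Heps) as [del Hdel].
  assert (Hm : 0 < Rmin del r) by (apply Rmin_pos; [apply cond_pos| lra]).
  exists (mkposreal _ Hm). intros h Hh Hhr. simpl in Hhr.
  rewrite <- !Hfg.
  - apply Hdel; auto. eapply Rlt_le_trans; [apply Hhr| apply Rmin_l].
  - rewrite Rminus_diag, Rabs_R0; lra.
  - replace (x + h - x) with h by ring. eapply Rlt_le_trans; [apply Hhr| apply Rmin_r].
Qed.

Lemma zero_deriv f a b : a < b -> (forall x, a <= x <= b -> relcont f a b x) ->
  (forall x, a < x < b -> derivable_pt_lim f x 0) -> f a = f b.
Proof.
  intros Hab Hc Hd.
  set (fc := fun t => f (clamp a b t)).
  destruct (MVT_open fc (fun _ => 0) a b Hab) as [c [Hc1 Hc2]].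
  - intros c Hcc. apply dpl_local with f (Rmin (c - a) (b - c)).
    + apply Rmin_pos; lra.
    + intros y Hy. unfold fc. rewrite clamp_id; auto.
      generalize (Rmin_l (c - a) (b - c)) (Rmin_r (c - a) (b - c)); intros.
      apply Rabs_def2 in Hy. lra.
    + apply Hd; auto.
  - intros c Hcc. apply relcont_clamp; auto; lra.
  - unfold fc in Hc2. rewrite !clamp_id in Hc2 by lra. lra.
Qed.

Lemma deriv_nonneg f x l r : 0 < r ->
  (forall y z, Rabs (y - x) < r -> Rabs (z - x) < r -> y <= z -> f y <= f z) ->
  derivable_pt_lim f x l -> 0 <= l.
Proof.
  intros Hr Hm H. destruct (Rle_dec 0 l) as [|Hl]; auto. exfalso.
  destruct (H (- l / 2)) as [del Hdel]; [lra|].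
  set (h := Rmin del r / 2).
  assert (Hh : 0 < h) by (unfold h; generalize (Rmin_pos del r (cond_pos del) Hr); lra).
  assert (Hh1 : h < del) by (unfold h; generalize (Rmin_l del r) (Rmin_pos del r (cond_pos del) Hr); lra).
  assert (Hh2 : h < r) by (unfold h; generalize (Rmin_r del r) (Rmin_pos del r (cond_pos del) Hr); lra).
  assert (Hq := Hdel h ltac:(lra) ltac:(rewrite Rabs_right; lra)).
  assert (Hmon : f x <= f (x + h)).
  { apply Hm; try lra; [rewrite Rminus_diag, Rabs_R0; lra| replace (x + h - x) with h by ring; rewrite Rabs_right; lra]. }
  apply Rabs_def2 in Hq. destruct Hq as [Hq _].
  assert (0 <= (f (x + h) - f x) / h) by (unfold Rdiv; apply Rmult_le_pos; [lra| apply Rlt_le, Rinv_0_lt_compat; lra]).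
  set (q := (f (x + h) - f x) / h) in *. lra.
Qed.

Lemma relcont_ext f g a b x : (forall y, a <= y <= b -> f y = g y) -> a <= x <= b ->
  relcont f a b x -> relcont g a b x.
Proof.
  intros E Hx H eps He. destruct (H eps He) as [d [Hd H']]. exists d; split; auto.
  intros y Hy Hy'. rewrite <- !E; auto.
Qed.

Lemma relcont_minus f g a b x : relcont f a b x -> relcont g a b x ->
  relcont (fun t => f t - g t) a b x.
Proof.
  intros H1 H2 eps He.
  destruct (H1 (eps/2)) as [d1 [Hd1 H1']]; [lra|].
  destruct (H2 (eps/2)) as [d2 [Hd2 H2']]; [lra|].
  exists (Rmin d1 d2); split; [apply Rmin_pos; lra|]. intros y Hy Hy'.
  generalize (Rmin_l d1 d2) (Rmin_r d1 d2); intros.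
  assert (A1 := H1' y Hy ltac:(lra)). assert (A2 := H2' y Hy ltac:(lra)).
  replace (f y - g y - (f x - g x)) with ((f y - f x) - (g y - g x)) by ring.
  eapply Rle_lt_trans; [apply Rabs_triang|]. rewrite Rabs_Ropp. lra.
Qed.

Lemma relcont_sub f a b a' b' x : a <= a' -> b' <= b -> relcont f a b x -> relcont f a' b' x.
Proof.
  intros Ha Hb H eps He. destruct (H eps He) as [d [Hd H']]. exists d; split; auto.
  intros y Hy Hy'. apply H'; auto; lra.
Qed.

Lemma abs_le_e x a : Rabs x <= a -> - a <= x <= a.
Proof. unfold Rabs; destruct Rcase_abs; intros; lra. Qed.

Lemma relcont_clamp_all f a b : a <= b -> (forall x, a <= x <= b -> relcont f a b x) ->
  forall x, continuity_pt (fun t => f (clamp a b t)) x.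
Proof.
  intros Hab H x eps Heps.
  destruct (H (clamp a b x) (clamp_in a b x Hab) eps Heps) as [del [Hd H']].
  exists del; split; [lra|].
  intros y [_ Hy]. simpl in *. unfold R_dist in *.
  apply H'. apply clamp_in; auto.
  eapply Rle_lt_trans; [apply clamp_lip; auto| exact Hy].
Qed.

Definition jc (P : R -> R -> Prop) (F : R -> R -> R) (x0 y0 : R) : Prop :=
  forall eps, 0 < eps -> exists del, 0 < del /\
    forall x y, P x y -> Rabs (x - x0) < del -> Rabs (y - y0) < del ->
      Rabs (F x y - F x0 y0) < eps.

Lemma jc_ext P F G x0 y0 : (forall x y, F x y = G x y) -> jc P F x0 y0 -> jc P G x0 y0.
Proof. intros E H eps He. destruct (H eps He) as [d [Hd H']]. exists d; split; auto.
  intros; rewrite <- !E; auto. Qed.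

Lemma jc_local P F G x0 y0 r : 0 < r ->
  (forall x y, P x y -> Rabs (x - x0) < r -> Rabs (y - y0) < r -> F x y = G x y) ->
  F x0 y0 = G x0 y0 -> jc P F x0 y0 -> jc P G x0 y0.
Proof.
  intros Hr E E0 H eps He. destruct (H eps He) as [d [Hd H']].
  exists (Rmin d r); split; [apply Rmin_pos; lra|].
  intros x y Hp Hx Hy.
  generalize (Rmin_l d r) (Rmin_r d r); intros.
  rewrite <- E0, <- E; auto; try lra. apply H'; auto; lra.
Qed.

Lemma jc_mono (P P' : R -> R -> Prop) F x0 y0 : (forall x y, P' x y -> P x y) -> jc P F x0 y0 -> jc P' F x0 y0.
Proof. intros HP H eps He. destruct (H eps He) as [d [Hd H']]. exists d; split; auto. Qed.

Lemma jc_const P c x0 y0 : jc P (fun _ _ => c) x0 y0.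
Proof. intros eps He. exists 1; split; [lra|]. intros. rewrite Rminus_diag, Rabs_R0; lra. Qed.

Lemma jc_fst P f x0 y0 : continuity_pt f x0 -> jc P (fun x _ => f x) x0 y0.
Proof.
  intros H eps He. destruct (cont_relcont f (x0 - 1) (x0 + 1) x0 H eps He) as [d [Hd H']].
  exists (Rmin d 1); split; [apply Rmin_pos; lra|]. intros x y _ Hx _.
  generalize (Rmin_l d 1) (Rmin_r d 1); intros.
  apply H'; [apply Rabs_def2 in Hx; lra| lra].
Qed.

Lemma jc_snd P f x0 y0 : continuity_pt f y0 -> jc P (fun _ y => f y) x0 y0.
Proof.
  intros H eps He. destruct (cont_relcont f (y0 - 1) (y0 + 1) y0 H eps He) as [d [Hd H']].
  exists (Rmin d 1); split; [apply Rmin_pos; lra|]. intros x y _ _ Hy.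
  generalize (Rmin_l d 1) (Rmin_r d 1); intros.
  apply H'; [apply Rabs_def2 in Hy; lra| lra].
Qed.

Lemma jc_id1 P x0 y0 : jc P (fun x _ => x) x0 y0.
Proof. intros eps He; exists eps; split; auto. Qed.
Lemma jc_id2 P x0 y0 : jc P (fun _ y => y) x0 y0.
Proof. intros eps He; exists eps; split; auto. Qed.

Lemma jc_plus P F G x0 y0 : jc P F x0 y0 -> jc P G x0 y0 -> jc P (fun x y => F x y + G x y) x0 y0.
Proof.
  intros H1 H2 eps He.
  destruct (H1 (eps/2)) as [d1 [Hd1 H1']]; [lra|].
  destruct (H2 (eps/2)) as [d2 [Hd2 H2']]; [lra|].
  exists (Rmin d1 d2); split; [apply Rmin_pos; lra|]. intros x y Hp Hx Hy.
  generalize (Rmin_l d1 d2) (Rmin_r d1 d2); intros.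
  assert (A1 := H1' x y Hp ltac:(lra) ltac:(lra)).
  assert (A2 := H2' x y Hp ltac:(lra) ltac:(lra)).
  replace (F x y + G x y - (F x0 y0 + G x0 y0)) with ((F x y - F x0 y0) + (G x y - G x0 y0)) by ring.
  eapply Rle_lt_trans; [apply Rabs_triang|]. lra.
Qed.

Lemma jc_comp P F g x0 y0 : jc P F x0 y0 -> continuity_pt g (F x0 y0) ->
  jc P (fun x y => g (F x y)) x0 y0.
Proof.
  intros H Hg eps He.
  destruct (cont_relcont g (F x0 y0 - 1) (F x0 y0 + 1) _ Hg eps He) as [a [Ha Ha']].
  destruct (H (Rmin a 1)) as [d [Hd H']]; [apply Rmin_pos; lra|].
  exists d; split; auto. intros x y Hp Hx Hy.
  assert (Hb := H' x y Hp Hx Hy).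
  generalize (Rmin_l a 1) (Rmin_r a 1); intros.
  apply Ha'; [apply Rabs_def2 in Hb; lra| lra].
Qed.

Lemma cont_sqr x : continuity_pt (fun t => t * t) x.
Proof. apply derivable_continuous_pt. apply derivable_pt_mult; apply derivable_pt_id. Qed.

Lemma cont_scal c x : continuity_pt (fun t => c * t) x.
Proof. apply derivable_continuous_pt. apply derivable_pt_mult; [apply derivable_pt_const| apply derivable_pt_id]. Qed.

Lemma jc_scal P F c x0 y0 : jc P F x0 y0 -> jc P (fun x y => c * F x y) x0 y0.
Proof. intros H. apply (jc_comp P F (fun t => c * t)); auto. apply cont_scal. Qed.

Lemma jc_opp P F x0 y0 : jc P F x0 y0 -> jc P (fun x y => - F x y) x0 y0.
Proof. intros H. apply jc_ext with (fun x y => (-1) * F x y); [intros; ring| apply jc_scal; auto]. Qed.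

Lemma jc_minus P F G x0 y0 : jc P F x0 y0 -> jc P G x0 y0 -> jc P (fun x y => F x y - G x y) x0 y0.
Proof. intros. apply jc_plus; auto. apply jc_opp; auto. Qed.

Lemma jc_mult P F G x0 y0 : jc P F x0 y0 -> jc P G x0 y0 -> jc P (fun x y => F x y * G x y) x0 y0.
Proof.
  intros H1 H2.
  apply jc_ext with (fun x y => / 4 * ((fun t => t * t) (F x y + G x y)) + (- / 4) * ((fun t => t * t) (F x y - G x y))).
  { intros; simpl; field. }
  apply jc_plus; apply jc_scal.
  - apply (jc_comp P (fun x y => F x y + G x y) (fun t => t * t)); [apply jc_plus; auto| apply cont_sqr].
  - apply (jc_comp P (fun x y => F x y - G x y) (fun t => t * t)); [apply jc_minus; auto| apply cont_sqr].
Qed.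

Lemma jc_inv P F x0 y0 : jc P F x0 y0 -> F x0 y0 <> 0 -> jc P (fun x y => / F x y) x0 y0.
Proof.
  intros H Hn. apply (jc_comp P F (fun t => / t)); auto.
  apply (continuity_pt_inv (fun t => t)); auto.
  apply derivable_continuous_pt, derivable_pt_id.
Qed.

Lemma jc_relcont P F a b phi x0 : (forall x, a <= x <= b -> P x phi) -> jc P F x0 phi ->
  relcont (fun t => F t phi) a b x0.
Proof.
  intros HP H eps He. destruct (H eps He) as [d [Hd H']]. exists d; split; auto.
  intros y Hy Hy'. apply H'; auto. rewrite Rminus_diag, Rabs_R0; lra.
Qed.

Lemma jc_relcont2 P F a b th y0 : (forall y, a <= y <= b -> P th y) -> jc P F th y0 ->
  relcont (fun t => F th t) a b y0.
Proof.
  intros HP H eps He. destruct (H eps He) as [d [Hd H']]. exists d; split; auto.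
  intros y Hy Hy'. apply H'; auto. rewrite Rminus_diag, Rabs_R0; lra.
Qed.

Definition rect a b c d (x y : R) : Prop := a <= x <= b /\ c <= y <= d.

Lemma inv_le_nat (K k : nat) : (K <= k)%nat -> / (INR k + 1) <= / (INR K + 1).
Proof. intros. apply Rinv_le_contravar. generalize (pos_INR K); lra. apply le_INR in H; lra. Qed.

Lemma inv_pos_nat (k : nat) : 0 < / (INR k + 1).
Proof. apply Rinv_0_lt_compat. generalize (pos_INR k); lra. Qed.

Lemma valadh_in (u : nat -> R) a b l : (forall n, a <= u n <= b) -> ValAdh u l -> a <= l <= b.
Proof.
  intros Hu Hl. split; apply Rnot_lt_le; intro Hc.
  - assert (Hp : 0 < a - l) by lra.
    destruct (Hl (disc l (mkposreal _ Hp)) 0%nat) as [p [_ Hp']].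
    { exists (mkposreal _ Hp); intros z Hz; auto. }
    unfold disc in Hp'; simpl in Hp'. apply Rabs_def2 in Hp'. generalize (Hu p); lra.
  - assert (Hp : 0 < l - b) by lra.
    destruct (Hl (disc l (mkposreal _ Hp)) 0%nat) as [p [_ Hp']].
    { exists (mkposreal _ Hp); intros z Hz; auto. }
    unfold disc in Hp'; simpl in Hp'. apply Rabs_def2 in Hp'. generalize (Hu p); lra.
Qed.

Lemma valadh_close (u : nat -> R) l (e : R) (N : nat) : 0 < e -> ValAdh u l ->
  exists p, (N <= p)%nat /\ Rabs (u p - l) < e.
Proof.
  intros He Hl. destruct (Hl (disc l (mkposreal _ He)) N) as [p [Hp Hp']].
  { exists (mkposreal _ He); intros z Hz; auto. }
  exists p; split; auto.
Qed.

Lemma unif2 F a b c d : (forall x y, rect a b c d x y -> jc (rect a b c d) F x y) ->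
  forall eps, 0 < eps -> exists del, 0 < del /\ forall x y x' y',
    rect a b c d x y -> rect a b c d x' y' -> Rabs (x - x') < del -> Rabs (y - y') < del ->
    Rabs (F x y - F x' y') < eps.
Proof.
  intros Hjc eps He. apply NNPP; intro Hno.
  assert (Hn : forall n : nat, exists p : (R*R)*(R*R),
    rect a b c d (fst (fst p)) (snd (fst p)) /\ rect a b c d (fst (snd p)) (snd (snd p)) /\
    Rabs (fst (fst p) - fst (snd p)) < / (INR n + 1) /\
    Rabs (snd (fst p) - snd (snd p)) < / (INR n + 1) /\
    eps <= Rabs (F (fst (fst p)) (snd (fst p)) - F (fst (snd p)) (snd (snd p)))).
  { intro n. apply NNPP; intro Hn. apply Hno. exists (/ (INR n + 1)). split; [apply inv_pos_nat|].
    intros x y x' y' H1 H2 H3 H4. apply Rnot_le_lt; intro Hc. apply Hn.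
    exists ((x, y), (x', y')); simpl; auto. }
  set (s := fun n => proj1_sig (constructive_indefinite_description _ (Hn n))).
  assert (Hs : forall n, let p := s n in
    rect a b c d (fst (fst p)) (snd (fst p)) /\ rect a b c d (fst (snd p)) (snd (snd p)) /\
    Rabs (fst (fst p) - fst (snd p)) < / (INR n + 1) /\
    Rabs (snd (fst p) - snd (snd p)) < / (INR n + 1) /\
    eps <= Rabs (F (fst (fst p)) (snd (fst p)) - F (fst (snd p)) (snd (snd p)))).
  { intro n. unfold s. apply (proj2_sig (constructive_indefinite_description _ (Hn n))). }
  clearbody s. clear Hn Hno.
  set (xs := fun n => fst (fst (s n))).
  set (ys := fun n => snd (fst (s n))).
  destruct (Bolzano_Weierstrass xs (fun z => a <= z <= b) (compact_P3 a b)) as [l Hl].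
  { intro n. destruct (Hs n) as [[H _] _]. exact H. }
  assert (Hla : a <= l <= b).
  { apply (valadh_in xs); auto. intro n. destruct (Hs n) as [[H _] _]. exact H. }
  assert (Hk : forall k : nat, exists n, (k <= n)%nat /\ Rabs (xs n - l) < / (INR k + 1)).
  { intro k. apply valadh_close; auto. apply inv_pos_nat. }
  set (nk := fun k => proj1_sig (constructive_indefinite_description _ (Hk k))).
  assert (Hnk : forall k, (k <= nk k)%nat /\ Rabs (xs (nk k) - l) < / (INR k + 1)).
  { intro k. unfold nk. apply (proj2_sig (constructive_indefinite_description _ (Hk k))). }
  clearbody nk. clear Hk.
  destruct (Bolzano_Weierstrass (fun k => ys (nk k)) (fun z => c <= z <= d) (compact_P3 c d)) as [m Hm].
  { intro k. destruct (Hs (nk k)) as [[_ H] _]. exact H. }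
  assert (Hma : c <= m <= d).
  { apply (valadh_in (fun k => ys (nk k))); auto. intro k. destruct (Hs (nk k)) as [[_ H] _]. exact H. }
  destruct (Hjc l m (conj Hla Hma) (eps / 2)) as [del [Hd Hdel]]; [lra|].
  destruct (archimed_cor1 (del / 2)) as [K [HK1 HK2]]; [lra|].
  assert (HK3 : / (INR K + 1) < del / 2).
  { eapply Rle_lt_trans; [|apply HK1]. apply Rinv_le_contravar. apply lt_0_INR; auto. lra. }
  destruct (valadh_close (fun k => ys (nk k)) m (del / 2) K) as [k [Hk1 Hk2]]; [lra| auto|].
  simpl in Hk2.
  destruct (Hnk k) as [Hn1 Hn2].
  set (n := nk k) in *.
  assert (I1 := inv_le_nat K k Hk1).
  assert (I2 := inv_le_nat K n ltac:(lia)).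
  destruct (Hs n) as [R1 [R2 [D1 [D2 Heps]]]].
  fold (xs n) (ys n) in *.
  assert (E1 : Rabs (F (xs n) (ys n) - F l m) < eps / 2).
  { apply Hdel; auto; lra. }
  assert (E2 : Rabs (F (fst (snd (s n))) (snd (snd (s n))) - F l m) < eps / 2).
  { apply Hdel; auto.
    - apply Rabs_def2 in D1. apply Rabs_def2 in Hn2. apply Rabs_def1; lra.
    - apply Rabs_def2 in D2. apply Rabs_def2 in Hk2. apply Rabs_def1; lra. }
  assert (Rabs (F (xs n) (ys n) - F (fst (snd (s n))) (snd (snd (s n)))) < eps).
  { apply Rabs_def2 in E1. apply Rabs_def2 in E2. apply Rabs_def1; lra. }
  lra.
Qed.

Lemma sin_lb_expand x : sin_lb x = x - x^3/6 + x^5/120 - x^7/5040.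
Proof. unfold sin_lb, sin_approx, sin_term. simpl sum_f_R0. field. Qed.

Lemma sin_lower x : 0 <= x <= PI/2 -> 2/5 * x <= sin x.
Proof.
  intros Hx. assert (Hp : PI / 2 <= 7/4) by (generalize pi2_int; unfold PI; lra).
  destruct (SIN x) as [H _]; try lra. rewrite sin_lb_expand in H.
  assert (x*x <= 49/16) by nra.
  assert (x^4/120 - x^6/5040 >= 0).
  { assert (0 <= x^4) by (apply pow_le; lra).
    replace (x^6) with (x^4 * (x*x)) by ring. nra. }
  assert (x * (3/5 - x*x/6) >= 0) by nra.
  nra.
Qed.

Lemma abs_sin_lower x : Rabs x <= PI/2 -> 2/5 * Rabs x <= Rabs (sin x).
Proof.
  intros H. unfold Rabs in *. destruct (Rcase_abs x).
  - assert (Hs := sin_lower (- x) ltac:(lra)). rewrite sin_neg in Hs.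
    destruct (Rcase_abs (sin x)); lra.
  - assert (Hs := sin_lower x ltac:(lra)).
    destruct (Rcase_abs (sin x)); lra.
Qed.

Lemma PI_bnd : 7/4 <= PI <= 7/2.
Proof. generalize pi2_int; unfold PI; lra. Qed.

Lemma sin_le_pos x : 0 <= x -> Rabs (sin x) <= x.
Proof.
  intros H. destruct (Req_dec x 0) as [->|Hn]. { rewrite sin_0, Rabs_R0; lra. }
  assert (H1 := sin_lt_x x ltac:(lra)).
  assert (H2 : - x <= sin x).
  { destruct (Rle_dec 1 x). { generalize (SIN_bound x); lra. }
    assert (0 <= sin x) by (apply sin_ge_0; generalize PI_bnd; lra). lra. }
  apply Rabs_le; lra.
Qed.

Lemma abs_sin_le x : Rabs (sin x) <= Rabs x.
Proof.
  unfold Rabs at 2. destruct (Rcase_abs x).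
  - rewrite <- (Ropp_involutive x) at 1. rewrite sin_neg, Rabs_Ropp. apply sin_le_pos; lra.
  - apply sin_le_pos; lra.
Qed.

Lemma sin_nz x : 0 < Rabs x < PI -> sin x <> 0.
Proof.
  intros H Hs. destruct (sin_eq_0_0 x Hs) as [k ->].
  rewrite Rabs_mult, (Rabs_right PI) in H by (generalize PI_bnd; lra).
  destruct (Z.eq_dec k 0) as [->|Hk].
  - rewrite Rabs_R0 in H. lra.
  - assert (1 <= Rabs (IZR k)).
    { destruct (Z.ltb_spec k 0).
      + assert (IZR k <= -1) by (apply IZR_le; lia). rewrite Rabs_left; lra.
      + assert (1 <= IZR k) by (apply IZR_le; lia). rewrite Rabs_right; lra. }
    generalize PI_bnd; nra.
Qed.

Definition sinc (x : R) : R := if Req_EM_T x 0 then 1 else sin x / x.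

Lemma sinc_mul x : x * sinc x = sin x.
Proof. unfold sinc. destruct (Req_EM_T x 0) as [->|H]. { rewrite sin_0; ring. } field; auto. Qed.

Lemma sinc_nz x : Rabs x < PI -> sinc x <> 0.
Proof.
  intros H. unfold sinc. destruct (Req_EM_T x 0) as [->|Hn]; [lra|].
  intro E. apply (sin_nz x); [split; auto; apply Rabs_pos_lt; auto|].
  unfold Rdiv in E. apply Rmult_integral in E. destruct E as [E|E]; auto.
  exfalso; apply (Rinv_neq_0_compat x Hn E).
Qed.

Lemma sinc_cont x : continuity_pt sinc x.
Proof.
  destruct (Req_dec x 0) as [->|Hn].
  - intros eps He. destruct (derivable_pt_lim_sin 0 eps He) as [del Hd].
    exists del; split; [apply cond_pos|]. intros y [[_ Hy1] Hy2]. simpl in Hy2 |- *. unfold R_dist in *.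
    unfold sinc. destruct (Req_EM_T y 0) as [E|E]; [lra|]. destruct (Req_EM_T 0 0) as [_|E2]; [|lra].
    assert (Hq := Hd y E ltac:(rewrite Rminus_0_r in Hy2; exact Hy2)).
    rewrite Rplus_0_l, sin_0, Rminus_0_r, cos_0 in Hq. exact Hq.
  - assert (Hc : continuity_pt (fun t => sin t / t) x).
    { apply continuity_pt_div; auto. apply continuity_sin. apply derivable_continuous_pt, derivable_pt_id. }
    intros eps He. destruct (Hc eps He) as [del [Hd Hd']].
    exists (Rmin del (Rabs x)); split. { apply Rmin_pos; auto. apply Rabs_pos_lt; auto. }
    intros y [Hy1 Hy2]. simpl in Hy2 |- *. unfold R_dist in *.
    generalize (Rmin_l del (Rabs x)) (Rmin_r del (Rabs x)); intros.
    unfold sinc. destruct (Req_EM_T y 0) as [E|E].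
    { subst. rewrite Rminus_0_l, Rabs_Ropp in Hy2. lra. }
    destruct (Req_EM_T x 0) as [E2|E2]; [lra|].
    apply (Hd' y). split; auto. simpl; unfold R_dist; lra.
Qed.

Lemma dpl_val f x l l' : derivable_pt_lim f x l -> l = l' -> derivable_pt_lim f x l'.
Proof. intros H ->; auto. Qed.
Lemma dpl_mult' f g x lf lg : derivable_pt_lim f x lf -> derivable_pt_lim g x lg ->
  derivable_pt_lim (fun t => f t * g t) x (lf * g x + f x * lg).
Proof. intros; exact (derivable_pt_lim_mult f g x lf lg H H0). Qed.
Lemma dpl_div' f g x lf lg : derivable_pt_lim f x lf -> derivable_pt_lim g x lg -> g x <> 0 ->
  derivable_pt_lim (fun t => f t / g t) x ((lf * g x - lg * f x) / (g x * g x)).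
Proof. intros. exact (derivable_pt_lim_div f g x lf lg H H0 H1). Qed.
Lemma dpl_sin' f x l : derivable_pt_lim f x l -> derivable_pt_lim (fun t => sin (f t)) x (cos (f x) * l).
Proof. intros. exact (derivable_pt_lim_comp f sin x l (cos (f x)) H (derivable_pt_lim_sin _)). Qed.
Lemma dpl_minus' f g x lf lg : derivable_pt_lim f x lf -> derivable_pt_lim g x lg ->
  derivable_pt_lim (fun t => f t - g t) x (lf - lg).
Proof. intros; exact (derivable_pt_lim_minus f g x lf lg H H0). Qed.
Lemma dpl_const' c x : derivable_pt_lim (fun _ => c) x 0.
Proof. exact (derivable_pt_lim_const c x). Qed.
Lemma dpl_id' x : derivable_pt_lim (fun t => t) x 1.
Proof. exact (derivable_pt_lim_id x). Qed.
Lemma dpl_scal' f c x l : derivable_pt_lim f x l -> derivable_pt_lim (fun t => c * f t) x (c * l).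
Proof. intros. exact (derivable_pt_lim_scal f c x l H). Qed.
Lemma dpl_divc f c x l : derivable_pt_lim f x l -> derivable_pt_lim (fun t => f t / c) x (l / c).
Proof. intros. apply dpl_local with (fun t => / c * f t) 1; [lra| intros; unfold Rdiv; ring|].
  apply dpl_val with (/ c * l); [apply dpl_scal'; auto| unfold Rdiv; ring]. Qed.

Section Main.
Variables X D : R -> R.
Hypothesis Xc : forall x, continuity_pt X x.
Hypothesis Dc : forall x, continuity_pt D x.
Hypothesis Xd : forall x, 0 < x < 2 * PI -> derivable_pt_lim X x (D x).
Hypothesis Xinc : forall x y, 0 <= x <= 2 * PI -> 0 <= y <= 2 * PI -> x < y -> X x < X y.
Hypothesis Xper : X (2 * PI) = X 0 + 2 * PI.

Definition Sq := rect 0 (2 * PI) 0 (2 * PI).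

Definition Q th ph := if Req_EM_T th ph then D ph else (X th - X ph) / (th - ph).

Lemma Q_mvt th ph : Sq th ph -> exists c, 0 <= c <= 2 * PI /\
   ((th <= c <= ph) \/ (ph <= c <= th)) /\ Q th ph = D c.
Proof.
  intros [H1 H2]. unfold Q. destruct (Req_EM_T th ph) as [->|Hn].
  - exists ph. repeat split; try lra.
  - destruct (Rlt_dec th ph) as [Hl|Hl].
    + destruct (MVT_open X D th ph Hl) as [c [Hc1 Hc2]].
      { intros c Hc; apply Xd; lra. }
      { intros; apply Xc. }
      exists c. repeat split; try lra.
      replace (X th - X ph) with (- (X ph - X th)) by ring. rewrite Hc2. field. lra.
    + assert (Hl' : ph < th) by lra.
      destruct (MVT_open X D ph th Hl') as [c [Hc1 Hc2]].
      { intros c Hc; apply Xd; lra. }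
      { intros; apply Xc. }
      exists c. repeat split; try lra.
      rewrite Hc2. field. lra.
Qed.

Lemma D_bound : exists M, 0 <= M /\ forall x, 0 <= x <= 2 * PI -> Rabs (D x) <= M.
Proof.
  destruct (continuity_ab_maj (fun t => Rabs (D t)) 0 (2 * PI)) as [m [Hm _]].
  { generalize PI_RGT_0; lra. }
  { intros c _. apply (continuity_pt_comp D Rabs); auto. apply Rcontinuity_abs. }
  exists (Rabs (D m)). split; [apply Rabs_pos| auto].
Qed.

Lemma Q_jc t0 p0 : Sq t0 p0 -> jc Sq Q t0 p0.
Proof.
  intros Hs. destruct (Req_dec t0 p0) as [<-|Hn].
  - intros eps He. destruct (cont_relcont D (t0 - 1) (t0 + 1) t0 (Dc t0) eps He) as [a [Ha Ha']].
    exists (Rmin a 1); split; [apply Rmin_pos; lra|].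
    intros x y Hxy Hx Hy.
    generalize (Rmin_l a 1) (Rmin_r a 1); intros.
    destruct (Q_mvt x y Hxy) as [c [Hc1 [Hc2 Hc4]]].
    rewrite Hc4. unfold Q. destruct (Req_EM_T t0 t0) as [_|E]; [|lra].
    apply Rabs_def2 in Hx. apply Rabs_def2 in Hy.
    apply Ha'; [lra|]. apply Rabs_def1; lra.
  - set (r := Rabs (t0 - p0) / 2).
    assert (Hr : 0 < r) by (unfold r; generalize (Rabs_pos_lt (t0 - p0) ltac:(lra)); lra).
    apply jc_local with (F := fun x y => (X x - X y) * / (x - y)) (r := r); auto.
    + intros x y _ Hx Hy. unfold Q. destruct (Req_EM_T x y) as [E|E]; [|reflexivity].
      exfalso. subst y. unfold r in *. apply Rabs_def2 in Hx. apply Rabs_def2 in Hy.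
      unfold Rabs in *. destruct (Rcase_abs (t0 - p0)); lra.
    + unfold Q. destruct (Req_EM_T t0 p0); [lra|reflexivity].
    + apply jc_mult.
      * apply jc_minus; [apply jc_fst| apply jc_snd]; auto.
      * apply jc_inv; [apply jc_minus; [apply jc_id1| apply jc_id2]| lra].
Qed.

Definition Rc c th ph := (Q th ph - c) * sinc ((Q th ph - c) * ((th - ph) / 2)) * / sinc ((th - ph) / 2).
Definition Kt th ph := Rc 0 th ph * Rc 0 th ph * (D th - 1).
Definition Gf th ph := D th * (Rc 1 th ph * Rc 1 th ph).
Definition H0 ph th := 2 * sin ((X th - X ph) / 2) * sin ((X th - X ph) / 2 - (th - ph) / 2) / sin ((th - ph) / 2).

Lemma jc_half t0 p0 : jc Sq (fun x y => (x - y) / 2) t0 p0.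
Proof.
  apply jc_ext with (fun x y => (x - y) * / 2); [intros; reflexivity|].
  apply jc_mult; [apply jc_minus; [apply jc_id1| apply jc_id2]| apply jc_const].
Qed.

Lemma Rc_jc c t0 p0 : Sq t0 p0 -> Rabs (t0 - p0) < 2 * PI -> jc Sq (Rc c) t0 p0.
Proof.
  intros Hs Ht. unfold Rc.
  apply (jc_mult Sq (fun x y => (Q x y - c) * sinc ((Q x y - c) * ((x - y) / 2)))
                    (fun x y => / sinc ((x - y) / 2))).
  - apply (jc_mult Sq (fun x y => Q x y - c) (fun x y => sinc ((Q x y - c) * ((x - y) / 2)))).
    + apply jc_minus; [apply Q_jc; auto| apply jc_const].
    + apply (jc_comp Sq (fun x y => (Q x y - c) * ((x - y) / 2)) sinc); [|apply sinc_cont].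
      apply (jc_mult Sq (fun x y => Q x y - c) (fun x y => (x - y) / 2)).
      * apply jc_minus; [apply Q_jc; auto| apply jc_const].
      * apply jc_half.
  - apply (jc_inv Sq (fun x y => sinc ((x - y) / 2))).
    + apply (jc_comp Sq (fun x y => (x - y) / 2) sinc); [apply jc_half| apply sinc_cont].
    + apply sinc_nz. unfold Rdiv. rewrite Rabs_mult, (Rabs_right (/2)) by lra. lra.
Qed.

Lemma Kt_jc t0 p0 : Sq t0 p0 -> Rabs (t0 - p0) < 2 * PI -> jc Sq Kt t0 p0.
Proof.
  intros Hs Ht. unfold Kt.
  apply (jc_mult Sq (fun x y => Rc 0 x y * Rc 0 x y) (fun x y => D x - 1)).
  - apply (jc_mult Sq (Rc 0) (Rc 0)); apply Rc_jc; auto.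
  - apply jc_minus; [apply jc_fst; auto| apply jc_const].
Qed.

Lemma Gf_jc t0 p0 : Sq t0 p0 -> Rabs (t0 - p0) < 2 * PI -> jc Sq Gf t0 p0.
Proof.
  intros Hs Ht. unfold Gf.
  apply (jc_mult Sq (fun x y => D x) (fun x y => Rc 1 x y * Rc 1 x y)).
  - apply jc_fst; auto.
  - apply (jc_mult Sq (Rc 1) (Rc 1)); apply Rc_jc; auto.
Qed.

Lemma H0rep_jc t0 p0 : Sq t0 p0 -> Rabs (t0 - p0) < 2 * PI ->
  jc Sq (fun x y => 2 * sin ((X x - X y) / 2) * Rc 1 x y) t0 p0.
Proof.
  intros Hs Ht.
  apply (jc_mult Sq (fun x y => 2 * sin ((X x - X y) / 2)) (Rc 1)); [|apply Rc_jc; auto].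
  apply jc_scal. apply (jc_comp Sq (fun x y => (X x - X y) / 2) sin); [|apply continuity_sin].
  apply jc_ext with (fun x y => (X x - X y) * / 2); [intros; reflexivity|].
  apply jc_mult; [apply jc_minus; [apply jc_fst| apply jc_snd]; auto| apply jc_const].
Qed.

Lemma sinB_nz th ph : th <> ph -> Rabs (th - ph) < 2 * PI -> sin ((th - ph) / 2) <> 0.
Proof.
  intros Hn Ht. apply sin_nz. unfold Rdiv. rewrite Rabs_mult, (Rabs_right (/2)) by lra.
  split; [|lra]. apply Rmult_lt_0_compat; [apply Rabs_pos_lt; lra| lra].
Qed.

Lemma Rc_formula c th ph : th <> ph -> sin ((th - ph) / 2) <> 0 ->
  Rc c th ph = sin ((X th - X ph) / 2 - c * ((th - ph) / 2)) / sin ((th - ph) / 2).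
Proof.
  intros Hn Hs. unfold Rc.
  assert (EQ : Q th ph = (X th - X ph) / (th - ph)).
  { unfold Q. destruct (Req_EM_T th ph); [lra| reflexivity]. }
  assert (Hu : (Q th ph - c) * ((th - ph) / 2) = (X th - X ph) / 2 - c * ((th - ph) / 2)).
  { rewrite EQ. field. lra. }
  rewrite <- Hu.
  assert (HB : (th - ph) / 2 <> 0) by lra.
  assert (Hsb : sinc ((th - ph) / 2) = sin ((th - ph) / 2) / ((th - ph) / 2)).
  { unfold sinc. destruct (Req_EM_T ((th - ph) / 2) 0); [lra| reflexivity]. }
  rewrite <- (sinc_mul ((Q th ph - c) * ((th - ph) / 2))).
  rewrite Hsb. field. split; auto. lra.
Qed.

Lemma kernel_Kt th ph : th <> ph -> Rabs (th - ph) < 2 * PI -> kernel5p3 X D th ph = Kt th ph.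
Proof.
  intros Hn Ht. assert (Hs := sinB_nz th ph Hn Ht).
  unfold kernel5p3, Kt. rewrite Rc_formula by auto.
  replace (X th - X ph) with (2 * ((X th - X ph) / 2)) at 1 by field.
  replace (th - ph) with (2 * ((th - ph) / 2)) at 1 by field.
  rewrite !cos_2a_sin.
  replace ((X th - X ph) / 2 - 0 * ((th - ph) / 2)) with ((X th - X ph) / 2) by ring.
  field. split; auto. intro E. apply Hs. nra.
Qed.

Lemma H0_rep th ph : Rabs (th - ph) < 2 * PI ->
  H0 ph th = 2 * sin ((X th - X ph) / 2) * Rc 1 th ph.
Proof.
  intros Ht. destruct (Req_dec th ph) as [<-|Hn].
  - unfold H0. rewrite !Rminus_diag. unfold Rdiv. rewrite !Rmult_0_l, sin_0. ring.
  - assert (Hs := sinB_nz th ph Hn Ht). unfold H0. rewrite Rc_formula by auto.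
    replace (1 * ((th - ph) / 2)) with ((th - ph) / 2) by ring. field; auto.
Qed.

Lemma H0_deriv ph th : 0 < ph < 2 * PI -> 0 < th < 2 * PI -> th <> ph ->
  derivable_pt_lim (H0 ph) th (Kt th ph - Gf th ph).
Proof.
  intros Hp Ht Hn.
  assert (Htp : Rabs (th - ph) < 2 * PI) by (apply Rabs_def1; lra).
  assert (Hs := sinB_nz th ph Hn Htp).
  assert (Da : derivable_pt_lim (fun t => (X t - X ph) / 2) th (D th / 2)).
  { apply dpl_divc. apply dpl_val with (D th - 0); [|ring]. apply dpl_minus'; [apply Xd; lra| apply dpl_const']. }
  assert (Db : derivable_pt_lim (fun t => (t - ph) / 2) th (1 / 2)).
  { apply dpl_divc. apply dpl_val with (1 - 0); [|ring]. apply dpl_minus'; [apply dpl_id'| apply dpl_const']. }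
  unfold H0.
  eapply dpl_val.
  - apply (dpl_div' (fun t => 2 * sin ((X t - X ph) / 2) * sin ((X t - X ph) / 2 - (t - ph) / 2))
                   (fun t => sin ((t - ph) / 2))); [| apply dpl_sin'; exact Db| exact Hs].
    apply (dpl_mult' (fun t => 2 * sin ((X t - X ph) / 2)) (fun t => sin ((X t - X ph) / 2 - (t - ph) / 2))).
    + apply dpl_scal'. apply dpl_sin'; exact Da.
    + apply dpl_sin'. apply (dpl_minus' (fun t => (X t - X ph) / 2) (fun t => (t - ph) / 2)); [exact Da| exact Db].
  - unfold Kt, Gf. rewrite !Rc_formula by auto.
    replace ((X th - X ph) / 2 - 0 * ((th - ph) / 2)) with ((X th - X ph) / 2) by ring.
    replace ((X th - X ph) / 2 - 1 * ((th - ph) / 2)) with ((X th - X ph) / 2 - (th - ph) / 2) by ring.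
    set (a := (X th - X ph) / 2). set (b := (th - ph) / 2). fold b in Hs.
    rewrite sin_minus, cos_minus.
    assert (E : cos b * cos b = 1 - sin b * sin b) by (generalize (sin2_cos2 b); unfold Rsqr; lra).
    apply Rminus_diag_uniq.
    set (sa := sin a) in *. set (ca := cos a) in *. set (sb := sin b) in *. set (cb := cos b) in *.
    set (d := D th).
    field_simplify; auto.
    assert (E2 : cb ^ 2 = 1 - sb ^ 2) by (replace (cb ^ 2) with (cb * cb) by ring; rewrite E; ring).
    rewrite E2. field. auto.
Qed.


Lemma T_pos : 0 < 2 * PI.
Proof. generalize PI_RGT_0; lra. Qed.

Lemma kernel_per th : kernel5p3 X D th 0 = kernel5p3 X D th (2 * PI).
Proof.
  unfold kernel5p3. rewrite Xper.
  replace (X th - (X 0 + 2 * PI)) with ((X th - X 0) - 2 * PI) by ring.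
  replace (th - 2 * PI) with ((th - 0) - 2 * PI) by ring.
  rewrite !(cos_minus _ (2 * PI)), cos_2PI, sin_2PI. f_equal; f_equal; f_equal; ring.
Qed.

Lemma Kt_relcont ph a b x : 0 <= a -> b <= 2 * PI -> 0 <= ph <= 2 * PI -> a <= x <= b ->
  Rabs (x - ph) < 2 * PI -> relcont (fun t => Kt t ph) a b x.
Proof.
  intros Ha Hb Hp Hx Ht. apply (jc_relcont Sq); [intros; split; lra|].
  apply Kt_jc; auto. split; lra.
Qed.

Lemma Gf_relcont ph a b x : 0 <= a -> b <= 2 * PI -> 0 <= ph <= 2 * PI -> a <= x <= b ->
  Rabs (x - ph) < 2 * PI -> relcont (fun t => Gf t ph) a b x.
Proof.
  intros Ha Hb Hp Hx Ht. apply (jc_relcont Sq); [intros; split; lra|].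
  apply Gf_jc; auto. split; lra.
Qed.

Lemma ker_int ph : 0 <= ph <= 2 * PI -> Riemann_integrable (fun th => kernel5p3 X D th ph) 0 (2 * PI).
Proof.
  intros Hp. assert (HT := T_pos).
  assert (Hend : Riemann_integrable (fun th => kernel5p3 X D th (2 * PI)) 0 (2 * PI)).
  { apply RiemannInt_P21 with (PI); try lra.
    - apply Riemann_integrable_ext with (f := fun th => kernel5p3 X D th 0).
      { intros; apply kernel_per. }
      apply RI_pt_ext with (fun th => Kt th 0) 0; [lra| |].
      + intros x Hx _. rewrite kernel_Kt; auto; [lra| apply Rabs_def1; lra].
      + apply rc_int; [lra|]. intros x Hx. apply Kt_relcont; try lra. apply Rabs_def1; lra.
    - apply RI_pt_ext with (fun th => Kt th (2 * PI)) (2 * PI); [lra| |].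
      + intros x Hx Hn. rewrite kernel_Kt; auto. apply Rabs_def1; lra.
      + apply rc_int; [lra|]. intros x Hx. apply Kt_relcont; try lra. apply Rabs_def1; lra. }
  destruct (Rlt_dec 0 ph) as [H0p|H0p].
  - destruct (Rlt_dec ph (2 * PI)) as [H1p|H1p].
    + apply RI_pt_ext with (fun th => Kt th ph) ph; [lra| |].
      * intros x Hx Hn. rewrite kernel_Kt; auto. apply Rabs_def1; lra.
      * apply rc_int; [lra|]. intros x Hx. apply Kt_relcont; try lra. apply Rabs_def1; lra.
    + replace ph with (2 * PI) by lra. exact Hend.
  - replace ph with 0 by lra.
    apply Riemann_integrable_ext with (f := fun th => kernel5p3 X D th (2 * PI)); auto.
    intros; symmetry; apply kernel_per.
Qed.

Definition Iv ph : R :=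
  match Rle_dec 0 ph with
  | left h1 => match Rle_dec ph (2 * PI) with
               | left h2 => RiemannInt (ker_int ph (conj h1 h2))
               | right _ => 0 end
  | right _ => 0 end.

Lemma Iv_eq ph (pr : Riemann_integrable (fun th => kernel5p3 X D th ph) 0 (2 * PI)) :
  0 <= ph <= 2 * PI -> Iv ph = RiemannInt pr.
Proof.
  intros Hp. unfold Iv. destruct (Rle_dec 0 ph); [|lra]. destruct (Rle_dec ph (2 * PI)); [|lra].
  apply RiemannInt_P5.
Qed.

Lemma H0_per ph : H0 ph (2 * PI) = H0 ph 0.
Proof.
  unfold H0. rewrite Xper.
  replace ((X 0 + 2 * PI - X ph) / 2) with ((X 0 - X ph) / 2 + PI) by field.
  replace ((2 * PI - ph) / 2) with ((0 - ph) / 2 + PI) by field.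
  replace ((X 0 - X ph) / 2 + PI - ((0 - ph) / 2 + PI)) with ((X 0 - X ph) / 2 - (0 - ph) / 2) by ring.
  rewrite !neg_sin. unfold Rdiv. rewrite Rinv_opp. ring.
Qed.

Lemma FTC_main ph (pr : Riemann_integrable (fun t => Kt t ph + -1 * Gf t ph) 0 (2 * PI)) :
  0 < ph < 2 * PI -> RiemannInt pr = 0.
Proof.
  intros Hp. assert (HT := T_pos).
  pose (E := fun t => Kt t ph + -1 * Gf t ph).
  assert (HE : forall x, 0 <= x <= 2 * PI -> relcont E 0 (2 * PI) x).
  { intros x Hx. apply relcont_ext with (fun t => Kt t ph - Gf t ph); [intros; unfold E; ring| auto|].
    apply relcont_minus; [apply Kt_relcont| apply Gf_relcont]; try lra; apply Rabs_def1; lra. }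
  pose (Ec := fun t => E (clamp 0 (2 * PI) t)).
  assert (h : 0 <= 2 * PI) by lra.
  assert (C0 : forall x, 0 <= x <= 2 * PI -> continuity_pt Ec x).
  { intros x Hx. apply relcont_clamp; auto. }
  set (P := primitive h (FTC_P1 h C0)).
  assert (prc : Riemann_integrable Ec 0 (2 * PI)) by (apply continuity_implies_RiemannInt; auto).
  assert (E1 : RiemannInt pr = RiemannInt prc).
  { apply RiemannInt_P18; auto. intros x Hx. unfold Ec. rewrite clamp_id; [reflexivity| lra]. }
  rewrite E1, (RiemannInt_P20 h (FTC_P1 h C0) prc). fold P.
  assert (DP : forall x, 0 <= x <= 2 * PI -> derivable_pt_lim P x (Ec x)).
  { intros x Hx. apply RiemannInt_P28; auto. }
  set (F := fun t => P t - H0 ph t).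
  assert (HF : forall x, 0 <= x <= 2 * PI -> relcont F 0 (2 * PI) x).
  { intros x Hx. apply relcont_minus.
    - apply cont_relcont. apply derivable_continuous_pt. exists (Ec x). apply DP; auto.
    - apply relcont_ext with (fun t => 2 * sin ((X t - X ph) / 2) * Rc 1 t ph); auto.
      + intros y Hy. symmetry. apply H0_rep. apply Rabs_def1; lra.
      + apply (jc_relcont Sq (fun x y => 2 * sin ((X x - X y) / 2) * Rc 1 x y)); [intros; split; lra|]. apply H0rep_jc; [split; lra| apply Rabs_def1; lra]. }
  assert (DF : forall x, 0 < x < 2 * PI -> x <> ph -> derivable_pt_lim F x 0).
  { intros x Hx Hn. unfold F. apply dpl_val with (Ec x - (Kt x ph - Gf x ph)).
    - apply (dpl_minus' P (H0 ph)); [apply DP; lra| apply H0_deriv; auto].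
    - unfold Ec, E. rewrite clamp_id by lra. ring. }
  assert (F1 : F 0 = F ph).
  { apply zero_deriv; [lra| |].
    - intros x Hx. apply relcont_sub with 0 (2 * PI); try lra. apply HF; lra.
    - intros x Hx. apply DF; lra. }
  assert (F2 : F ph = F (2 * PI)).
  { apply zero_deriv; [lra| |].
    - intros x Hx. apply relcont_sub with 0 (2 * PI); try lra. apply HF; lra.
    - intros x Hx. apply DF; lra. }
  unfold F in F1, F2. rewrite H0_per in F2. lra.
Qed.

Lemma lipX M : (forall x, 0 <= x <= 2 * PI -> Rabs (D x) <= M) ->
  forall a b, 0 <= a <= 2 * PI -> 0 <= b <= 2 * PI -> Rabs (X a - X b) <= M * Rabs (a - b).
Proof.
  intros HM a b Ha Hb. destruct (Req_dec a b) as [<-|Hn].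
  { rewrite !Rminus_diag, Rabs_R0. lra. }
  destruct (Q_mvt a b (conj Ha Hb)) as [c [Hc [_ Hq]]].
  assert (E : X a - X b = Q a b * (a - b)).
  { unfold Q. destruct (Req_EM_T a b); [lra|]. field. lra. }
  rewrite E, Hq, Rabs_mult. apply Rmult_le_compat_r; [apply Rabs_pos| apply HM; auto].
Qed.

Lemma sin_ratio_aux M al be : 0 <= M -> Rabs al <= M * Rabs be -> Rabs be <= PI / 2 ->
  Rabs (sin al) <= 5 / 2 * M * Rabs (sin be).
Proof.
  intros HM H1 H2. assert (H3 := abs_sin_lower be H2). assert (H4 := abs_sin_le al).
  assert (M * Rabs be <= M * (5 / 2 * Rabs (sin be))) by (apply Rmult_le_compat_l; lra).
  lra.
Qed.

Lemma sin_ratio M : 0 <= M -> (forall x, 0 <= x <= 2 * PI -> Rabs (D x) <= M) ->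
  forall th ph, 0 <= th <= 2 * PI -> 0 <= ph <= 2 * PI ->
  Rabs (sin ((X th - X ph) / 2)) <= 5 / 2 * M * Rabs (sin ((th - ph) / 2)).
Proof.
  intros HM0 HM th ph Ht Hp. assert (L := lipX M HM). assert (HT := T_pos).
  destruct (Rle_dec (Rabs (th - ph)) PI) as [Hc|Hc].
  - apply sin_ratio_aux; auto.
    + unfold Rdiv. rewrite !Rabs_mult, (Rabs_right (/2)) by lra.
      assert (L1 := L th ph Ht Hp). nra.
    + unfold Rdiv. rewrite Rabs_mult, (Rabs_right (/2)) by lra. lra.
  - destruct (Rle_dec 0 (th - ph)) as [Hs|Hs].
    + rewrite Rabs_right in Hc by lra.
      replace ((X th - X ph) / 2) with (((X th - X (2 * PI)) + (X 0 - X ph)) / 2 + PI)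
        by (rewrite Xper; field).
      replace ((th - ph) / 2) with ((th - ph - 2 * PI) / 2 + PI) by field.
      rewrite !neg_sin, !Rabs_Ropp. apply sin_ratio_aux; auto.
      * unfold Rdiv. rewrite !Rabs_mult, (Rabs_right (/2)) by lra.
        assert (L1 := L th (2 * PI) Ht ltac:(lra)). assert (L2 := L 0 ph ltac:(lra) Hp).
        rewrite (Rabs_left1 (th - ph - 2 * PI)) by lra.
        rewrite (Rabs_left1 (th - 2 * PI)) in L1 by lra. rewrite (Rabs_left1 (0 - ph)) in L2 by lra.
        assert (Rabs (X th - X (2 * PI) + (X 0 - X ph)) <= Rabs (X th - X (2 * PI)) + Rabs (X 0 - X ph)) by apply Rabs_triang.
        nra.
      * unfold Rdiv. rewrite Rabs_mult, (Rabs_right (/2)), Rabs_left1 by lra. lra.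
    + rewrite Rabs_left in Hc by lra.
      replace ((X th - X ph) / 2) with (((X th - X 0) + (X (2 * PI) - X ph)) / 2 + - PI)
        by (rewrite Xper; field).
      replace ((th - ph) / 2) with ((th - ph + 2 * PI) / 2 + - PI) by field.
      assert (NS : forall z, sin (z + - PI) = - sin z).
      { intro z. replace (z + - PI) with (- (- z + PI)) by ring. rewrite sin_neg, neg_sin, sin_neg. ring. }
      rewrite !NS, !Rabs_Ropp. apply sin_ratio_aux; auto.
      * unfold Rdiv. rewrite !Rabs_mult, (Rabs_right (/2)) by lra.
        assert (L1 := L th 0 Ht ltac:(lra)). assert (L2 := L (2 * PI) ph ltac:(lra) Hp).
        rewrite (Rabs_right (th - ph + 2 * PI)) by lra.
        rewrite (Rabs_right (th - 0)) in L1 by lra. rewrite (Rabs_right (2 * PI - ph)) in L2 by lra.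
        assert (Rabs (X th - X 0 + (X (2 * PI) - X ph)) <= Rabs (X th - X 0) + Rabs (X (2 * PI) - X ph)) by apply Rabs_triang.
        nra.
      * unfold Rdiv. rewrite Rabs_mult, (Rabs_right (/2)), Rabs_right by lra. lra.
Qed.

Lemma ker_bound : exists MK, 0 <= MK /\ forall th ph, 0 <= th <= 2 * PI -> 0 <= ph <= 2 * PI ->
  Rabs (kernel5p3 X D th ph) <= MK.
Proof.
  destruct D_bound as [M [HM0 HM]].
  exists ((5 / 2 * M) * (5 / 2 * M) * (M + 1)). split; [apply Rmult_le_pos; nra|].
  intros th ph Ht Hp.
  assert (Hr := sin_ratio M HM0 HM th ph Ht Hp).
  unfold kernel5p3.
  replace (X th - X ph) with (2 * ((X th - X ph) / 2)) at 1 by field.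
  replace (th - ph) with (2 * ((th - ph) / 2)) at 1 by field.
  rewrite !cos_2a_sin.
  set (sa := sin ((X th - X ph) / 2)) in *. set (sb := sin ((th - ph) / 2)) in *.
  assert (HD : Rabs (D th - 1) <= M + 1).
  { eapply Rle_trans; [apply Rabs_triang|]. rewrite Rabs_Ropp, Rabs_R1. generalize (HM th Ht); lra. }
  destruct (Req_dec sb 0) as [E|E].
  - rewrite E. replace (1 - (1 - 2 * 0 * 0)) with 0 by ring. unfold Rdiv. rewrite Rinv_0.
    rewrite Rmult_0_r, Rmult_0_l, Rabs_R0. apply Rmult_le_pos; nra.
  - replace ((1 - (1 - 2 * sa * sa)) / (1 - (1 - 2 * sb * sb))) with ((sa / sb) * (sa / sb)) by (field; repeat split; auto; intro HH; apply E; nra).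
    rewrite Rabs_mult. apply Rmult_le_compat; try apply Rabs_pos; auto.
    rewrite Rabs_mult.
    assert (Hq : Rabs (sa / sb) <= 5 / 2 * M).
    { unfold Rdiv. rewrite Rabs_mult, Rabs_inv. 
      apply (Rmult_le_reg_r (Rabs sb)); [apply Rabs_pos_lt; auto|].
      rewrite Rmult_assoc, Rinv_l by (apply Rabs_no_R0; auto). lra. }
    apply Rmult_le_compat; try apply Rabs_pos; auto.
Qed.

Lemma Kt_int ph a b : 0 < a -> a <= b -> b < 2 * PI -> 0 <= ph <= 2 * PI ->
  Riemann_integrable (fun t => Kt t ph) a b.
Proof.
  intros Ha Hab Hb Hp. apply rc_int; auto. intros x Hx. apply Kt_relcont; try lra.
  apply Rabs_def1; lra.
Qed.

Lemma Iv_split MK ph e (pr : Riemann_integrable (fun t => Kt t ph) e (2 * PI - e)) :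
  (forall th ph, 0 <= th <= 2 * PI -> 0 <= ph <= 2 * PI -> Rabs (kernel5p3 X D th ph) <= MK) ->
  0 <= ph <= 2 * PI -> 0 < e < PI ->
  exists A C, Iv ph = A + RiemannInt pr + C /\ Rabs A <= MK * e /\ Rabs C <= MK * e.
Proof.
  intros HMK Hp He. assert (HT := T_pos).
  assert (pr0 := ker_int ph Hp).
  assert (p1 : Riemann_integrable (fun th => kernel5p3 X D th ph) 0 e) by (apply RiemannInt_P22 with (2 * PI); auto; lra).
  assert (p23 : Riemann_integrable (fun th => kernel5p3 X D th ph) e (2 * PI)) by (apply RiemannInt_P23 with 0; auto; lra).
  assert (p2 : Riemann_integrable (fun th => kernel5p3 X D th ph) e (2 * PI - e)) by (apply RiemannInt_P22 with (2 * PI); auto; lra).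
  assert (p3 : Riemann_integrable (fun th => kernel5p3 X D th ph) (2 * PI - e) (2 * PI)) by (apply RiemannInt_P23 with e; auto; lra).
  exists (RiemannInt p1), (RiemannInt p3). split; [|split].
  - rewrite (Iv_eq ph pr0 Hp), <- (RiemannInt_P26 p1 p23 pr0), <- (RiemannInt_P26 p2 p3 p23).
    rewrite (RI_pt_eq _ _ _ _ ph p2 pr); [ring| lra|].
    intros x Hx Hn. apply kernel_Kt; auto. apply Rabs_def1; lra.
  - replace (MK * e) with (MK * (e - 0)) by ring. apply RI_abs_le; [lra|]. intros; apply HMK; lra.
  - replace (MK * e) with (MK * (2 * PI - (2 * PI - e))) by ring. apply RI_abs_le; [lra|]. intros; apply HMK; lra.
Qed.

Lemma Iv_cont p0 : 0 <= p0 <= 2 * PI -> relcont Iv 0 (2 * PI) p0.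
Proof.
  intros Hp0 eps He. assert (HT := T_pos). assert (HPI := PI_RGT_0).
  destruct ker_bound as [MK [HMK0 HMK]].
  set (e := Rmin (eps / (8 * (MK + 1))) (PI / 2)).
  assert (He0 : 0 < e) by (unfold e; apply Rmin_pos; [apply Rdiv_lt_0_compat; lra| lra]).
  assert (He1 : e <= PI / 2) by apply Rmin_r.
  assert (He2 : MK * e <= eps / 8).
  { assert (e <= eps / (8 * (MK + 1))) by apply Rmin_l.
    assert (MK * e <= (MK + 1) * e) by nra.
    assert ((MK + 1) * e <= (MK + 1) * (eps / (8 * (MK + 1)))) by (apply Rmult_le_compat_l; lra).
    replace ((MK + 1) * (eps / (8 * (MK + 1)))) with (eps / 8) in * by (field; lra). lra. }
  assert (Hu : forall x y, rect e (2 * PI - e) 0 (2 * PI) x y -> jc (rect e (2 * PI - e) 0 (2 * PI)) Kt x y).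
  { intros x y [Hx Hy]. apply jc_mono with Sq; [intros a b [Ha Hb]; split; lra|].
    apply Kt_jc; [split; lra| apply Rabs_def1; lra]. }
  destruct (unif2 Kt _ _ _ _ Hu (eps / (4 * (2 * PI)))) as [del [Hd Hdel]].
  { apply Rdiv_lt_0_compat; lra. }
  exists del; split; auto. intros ph Hp Hpd.
  assert (pr1 := Kt_int ph e (2 * PI - e) He0 ltac:(lra) ltac:(lra) Hp).
  assert (pr2 := Kt_int p0 e (2 * PI - e) He0 ltac:(lra) ltac:(lra) Hp0).
  destruct (Iv_split MK ph e pr1 HMK Hp ltac:(lra)) as [A1 [C1 [E1 [B1 B2]]]].
  destruct (Iv_split MK p0 e pr2 HMK Hp0 ltac:(lra)) as [A2 [C2 [E2 [B3 B4]]]].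
  assert (pr3 := RiemannInt_P10 (-1) pr1 pr2).
  assert (E3 := RiemannInt_P13 pr1 pr2 pr3).
  assert (B5 : Rabs (RiemannInt pr3) <= eps / (4 * (2 * PI)) * (2 * PI - e - e)).
  { apply RI_abs_le; [lra|]. intros x Hx.
    replace (Kt x ph + -1 * Kt x p0) with (Kt x ph - Kt x p0) by ring.
    left. apply Hdel; try (split; lra).
    - rewrite Rminus_diag, Rabs_R0; lra.
    - exact Hpd. }
  assert (B6 : eps / (4 * (2 * PI)) * (2 * PI - e - e) <= eps / 4).
  { replace (eps / 4) with (eps / (4 * (2 * PI)) * (2 * PI)) by (field; lra).
    apply Rmult_le_compat_l; [apply Rlt_le, Rdiv_lt_0_compat; lra| lra]. }
  rewrite E1, E2.
  replace (A1 + RiemannInt pr1 + C1 - (A2 + RiemannInt pr2 + C2))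
    with (A1 + C1 - A2 - C2 + (RiemannInt pr1 + -1 * RiemannInt pr2)) by ring.
  rewrite <- E3.
  apply abs_le_e in B1. apply abs_le_e in B2. apply abs_le_e in B3. apply abs_le_e in B4.
  apply abs_le_e in B5. apply Rabs_def1; lra.
Qed.

Lemma Iv_int : Riemann_integrable Iv 0 (2 * PI).
Proof. apply rc_int; [generalize T_pos; lra|]. intros; apply Iv_cont; auto. Qed.

Lemma D_nn x : 0 < x < 2 * PI -> 0 <= D x.
Proof.
  intros Hx. apply (deriv_nonneg X x (D x) (Rmin x (2 * PI - x))); [apply Rmin_pos; lra| |apply Xd; auto].
  intros y z Hy Hz Hyz.
  generalize (Rmin_l x (2 * PI - x)) (Rmin_r x (2 * PI - x)); intros.
  apply Rabs_def2 in Hy. apply Rabs_def2 in Hz.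
  destruct (Req_dec y z) as [->|Hn]; [lra|]. left. apply Xinc; lra.
Qed.

Lemma Gf_nn x ph : 0 < x < 2 * PI -> 0 <= Gf x ph.
Proof. intros Hx. unfold Gf. apply Rmult_le_pos; [apply D_nn; auto| nra]. Qed.

Lemma Iv_G ph (prG : Riemann_integrable (fun t => Gf t ph) 0 (2 * PI)) :
  0 < ph < 2 * PI -> Iv ph = RiemannInt prG.
Proof.
  intros Hp. assert (HT := T_pos).
  assert (prK : Riemann_integrable (fun t => Kt t ph) 0 (2 * PI)).
  { apply rc_int; [lra|]. intros x Hx. apply Kt_relcont; try lra. apply Rabs_def1; lra. }
  assert (pr0 := ker_int ph ltac:(lra)).
  rewrite (Iv_eq ph pr0) by lra.
  rewrite (RI_pt_eq _ _ _ _ ph pr0 prK); [|lra|].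
  2:{ intros x Hx Hn. apply kernel_Kt; auto. apply Rabs_def1; lra. }
  assert (pr3 : Riemann_integrable (fun t => Kt t ph + -1 * Gf t ph) 0 (2 * PI)) by exact (RiemannInt_P10 (-1) prK prG).
  assert (E3 := RiemannInt_P13 prK prG pr3).
  cbv beta in E3. rewrite (FTC_main ph pr3 Hp) in E3. lra.
Qed.

Lemma Iv_nn ph : 0 < ph < 2 * PI -> 0 <= Iv ph.
Proof.
  intros Hp. assert (HT := T_pos).
  assert (prG : Riemann_integrable (fun t => Gf t ph) 0 (2 * PI)).
  { apply rc_int; [lra|]. intros x Hx. apply Gf_relcont; try lra. apply Rabs_def1; lra. }
  rewrite (Iv_G ph prG Hp). apply Rle_trans with (0 * (2 * PI - 0)); [lra|].
  apply RI_ge_const; [lra|]. intros; apply Gf_nn; auto.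
Qed.

Definition sq th := sin ((X th - X PI) / 2 - (th - PI) / 2).

Lemma sq_cont : continuity (fun t => (X t - X PI) / 2 - (t - PI) / 2).
Proof.
  intro x. apply continuity_pt_minus.
  - apply continuity_pt_div; [apply continuity_pt_minus; [apply Xc| apply continuity_pt_const; intros a b; reflexivity]|
      apply continuity_pt_const; intros a b; reflexivity| lra].
  - apply continuity_pt_div; [apply continuity_pt_minus; [apply derivable_continuous_pt, derivable_pt_id| apply continuity_pt_const; intros a b; reflexivity]|
      apply continuity_pt_const; intros a b; reflexivity| lra].
Qed.

Lemma Iv_zero_lin : Iv PI = 0 -> exists c, forall th, 0 <= th <= 2 * PI -> X th = th + c.
Proof.
  intros HI. assert (HT := T_pos). assert (HPI := PI_RGT_0).
  assert (prG : Riemann_integrable (fun t => Gf t PI) 0 (2 * PI)).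
  { apply rc_int; [lra|]. intros x Hx. apply Gf_relcont; try lra. apply Rabs_def1; lra. }
  rewrite (Iv_G PI prG ltac:(lra)) in HI.
  assert (G0 : forall x, 0 < x < 2 * PI -> Gf x PI = 0).
  { intros x Hx. destruct (Gf_nn x PI Hx) as [Hp|Hp]; [|auto].
    exfalso. assert (0 < RiemannInt prG); [|lra].
    apply RI_pos_pt with x; auto.
    - intros; apply Gf_nn; auto.
    - apply Gf_relcont; try lra. apply Rabs_def1; lra. }
  assert (S0 : forall x, 0 < x < 2 * PI -> D x = 0 \/ sq x = 0).
  { intros x Hx. destruct (Req_dec x PI) as [->|Hn].
    { right. unfold sq. replace ((X PI - X PI) / 2 - (PI - PI) / 2) with 0 by field. apply sin_0. }
    assert (Htp : Rabs (x - PI) < 2 * PI) by (apply Rabs_def1; lra).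
    assert (Hs := sinB_nz x PI Hn Htp).
    assert (G := G0 x Hx). unfold Gf in G. rewrite Rc_formula in G by auto.
    apply Rmult_integral in G. destruct G as [G|G]; [left; auto| right].
    assert (G' : sin ((X x - X PI) / 2 - 1 * ((x - PI) / 2)) / sin ((x - PI) / 2) = 0).
    { apply Rmult_integral in G. destruct G; auto. }
    unfold Rdiv in G'. apply Rmult_integral in G'. destruct G' as [G'|G'].
    - unfold sq. replace ((X x - X PI) / 2 - (x - PI) / 2) with ((X x - X PI) / 2 - 1 * ((x - PI) / 2)) by ring. exact G'.
    - exfalso; apply (Rinv_neq_0_compat _ Hs G'). }
  assert (S1 : forall x, 0 <= x <= 2 * PI -> sq x = 0).
  { intros x Hx. apply NNPP. intro Hn.
    assert (Hsc : continuity_pt sq x).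
    { apply (continuity_pt_comp (fun t => (X t - X PI) / 2 - (t - PI) / 2) sin); [apply sq_cont| apply continuity_sin]. }
    destruct (cont_relcont sq (x - 1) (x + 1) x Hsc (Rabs (sq x))) as [del [Hd Hdel]].
    { apply Rabs_pos_lt; auto. }
    assert (Hnz : forall y, Rabs (y - x) < Rmin del 1 -> sq y <> 0).
    { intros y Hy E. generalize (Rmin_l del 1) (Rmin_r del 1); intros.
      assert (Hq := Hdel y ltac:(apply Rabs_def2 in Hy; lra) ltac:(lra)).
      rewrite E, Rminus_0_l, Rabs_Ropp in Hq. lra. }
    assert (HxP : x <> PI).
    { intro E. subst. apply Hn. unfold sq. replace ((X PI - X PI) / 2 - (PI - PI) / 2) with 0 by field. apply sin_0. }
    set (t2 := Rmin (1/2) (Rmin del 1 / (2 * (2 * PI + 1)))).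
    assert (Ht2 : 0 < t2) by (unfold t2; apply Rmin_pos; [lra| apply Rdiv_lt_0_compat; [apply Rmin_pos; lra| lra]]).
    assert (Ht2' : t2 <= 1/2) by apply Rmin_l.
    assert (Ht2'' : t2 * (2 * (2 * PI + 1)) <= Rmin del 1).
    { assert (t2 <= Rmin del 1 / (2 * (2 * PI + 1))) by apply Rmin_r.
      apply (Rmult_le_compat_r (2 * (2 * PI + 1))) in H; [|lra].
      replace (Rmin del 1 / (2 * (2 * PI + 1)) * (2 * (2 * PI + 1))) with (Rmin del 1) in H by (field; lra). lra. }
    assert (Hmin : 0 < Rmin del 1) by (apply Rmin_pos; lra).
    assert (KEY : forall a b, a < b -> 0 < a -> b < 2 * PI -> Rabs (a - x) < Rmin del 1 -> Rabs (b - x) < Rmin del 1 -> False).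
    { intros a b Hab Ha Hb Hax Hbx.
      destruct (MVT_open X D a b Hab) as [c [Hc1 Hc2]].
      { intros c Hc. apply Xd. lra. }
      { intros; apply Xc. }
      assert (Dc0 : D c = 0).
      { destruct (S0 c ltac:(lra)) as [E|E]; auto. exfalso. apply (Hnz c); auto.
        apply Rabs_def2 in Hax. apply Rabs_def2 in Hbx. apply Rabs_def1; lra. }
      rewrite Dc0 in Hc2. assert (X a < X b) by (apply Xinc; lra). lra. }
    destruct (Rlt_dec x PI) as [Hl|Hl].
    + apply (KEY (x + t2 / 2 * (PI - x)) (x + t2 * (PI - x))); try nra.
      * apply Rabs_def1; nra.
      * apply Rabs_def1; nra.
    + apply (KEY (x - t2 * (x - PI)) (x - t2 / 2 * (x - PI))); try nra.
      * apply Rabs_def1; nra.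
      * apply Rabs_def1; nra. }
  exists (X PI - PI). intros th Hth. apply NNPP. intro Hne.
  set (g := fun t => (X t - X PI) / 2 - (t - PI) / 2).
  assert (Hw : sin (g th) = 0) by (apply S1; auto).
  destruct (sin_eq_0_0 _ Hw) as [k Hk].
  assert (Hk0 : k <> 0%Z).
  { intro E. subst k. apply Hne. unfold g in Hk. rewrite Rmult_0_l in Hk. lra. }
  assert (Hgc : continuity g) by apply sq_cont.
  assert (Hgp : g PI = 0) by (unfold g; rewrite !Rminus_diag; field).
  destruct (Z.ltb_spec k 0) as [Hkn|Hkp].
  + assert (IZR k <= -1) by (apply IZR_le; lia).
    assert (Hgt : g th <= - PI) by nra.
    destruct (IVT_cor (fun t => g t + PI / 2) (Rmin th PI) (Rmax th PI)) as [z [Hz1 Hz2]].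
    { intro t. apply continuity_pt_plus; [apply Hgc| apply continuity_pt_const; intros a b; reflexivity]. }
    { apply Rle_trans with th; [apply Rmin_l| apply Rmax_l]. }
    { unfold Rmin, Rmax. destruct (Rle_dec th PI); nra. }
    assert (Hz : 0 <= z <= 2 * PI).
    { unfold Rmin, Rmax in Hz1. destruct (Rle_dec th PI); lra. }
    assert (Sz := S1 z Hz). unfold sq in Sz. fold (g z) in Sz.
    replace (g z) with (- (PI / 2)) in Sz by lra. rewrite sin_neg, sin_PI2 in Sz. lra.
  + assert (1 <= IZR k) by (apply IZR_le; lia).
    assert (Hgt : PI <= g th) by nra.
    destruct (IVT_cor (fun t => g t - PI / 2) (Rmin th PI) (Rmax th PI)) as [z [Hz1 Hz2]].
    { intro t. apply continuity_pt_minus; [apply Hgc| apply continuity_pt_const; intros a b; reflexivity]. }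
    { apply Rle_trans with th; [apply Rmin_l| apply Rmax_l]. }
    { unfold Rmin, Rmax. destruct (Rle_dec th PI); nra. }
    assert (Hz : 0 <= z <= 2 * PI).
    { unfold Rmin, Rmax in Hz1. destruct (Rle_dec th PI); lra. }
    assert (Sz := S1 z Hz). unfold sq in Sz. fold (g z) in Sz.
    replace (g z) with (PI / 2) in Sz by lra. rewrite sin_PI2 in Sz. lra.
Qed.

Lemma lin_Iv c : (forall th, 0 <= th <= 2 * PI -> X th = th + c) ->
  forall ph, 0 <= ph <= 2 * PI -> Iv ph = 0.
Proof.
  intros Hc ph Hp. assert (HT := T_pos).
  assert (D1 : forall x, 0 < x < 2 * PI -> D x = 1).
  { intros x Hx. apply (uniqueness_limite X x); [apply Xd; auto|].
    apply dpl_local with (fun t => t + c) (Rmin x (2 * PI - x)); [apply Rmin_pos; lra| |].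
    - intros y Hy. generalize (Rmin_l x (2 * PI - x)) (Rmin_r x (2 * PI - x)); intros.
      apply Rabs_def2 in Hy. rewrite Hc; auto; lra.
    - apply dpl_val with (1 + 0); [|ring]. exact (derivable_pt_lim_plus _ _ x 1 0 (derivable_pt_lim_id x) (derivable_pt_lim_const c x)). }
  assert (pr := ker_int ph Hp). rewrite (Iv_eq ph pr Hp).
  assert (Hb : Rabs (RiemannInt pr) <= 0 * (2 * PI - 0)).
  { apply RI_abs_le; [lra|]. intros x Hx. unfold kernel5p3. rewrite D1 by auto.
    rewrite Rminus_diag, Rmult_0_r, Rabs_R0. lra. }
  rewrite Rmult_0_l in Hb. generalize (Rabs_pos (RiemannInt pr)); intro HH.
  assert (HH2 : Rabs (RiemannInt pr) = 0) by lra. revert HH2; unfold Rabs; destruct Rcase_abs; intros; lra.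
Qed.

End Main.

Theorem lemma5p3 (xi dxi : R -> R)
  (hC1 : C1_on_I xi dxi)
  (hinc : forall x y, in_I x -> in_I y -> x < y -> xi x < xi y)
  (hper : xi (2 * PI) = xi 0 + 2 * PI) :
  exists (I : R -> R) (J : R),
    (forall phi, in_I phi -> has_integral (fun theta => kernel5p3 xi dxi theta phi) 0 (2 * PI) (I phi)) /\
    has_integral I 0 (2 * PI) J /\
    0 <= J /\
    (J = 0 <-> exists c : R, forall theta, in_I theta -> xi theta = theta + c).
Proof.
  destruct hC1 as [hxc [hxd hdc]].
  assert (HT := T_pos). assert (HPI := PI_RGT_0).
  assert (Hab : 0 <= 2 * PI) by lra.
  set (X := fun t => xi (clamp 0 (2 * PI) t)).
  set (D := fun t => dxi (clamp 0 (2 * PI) t)).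
  assert (RC : forall f, cont_on_I f -> forall x, 0 <= x <= 2 * PI -> relcont f 0 (2 * PI) x).
  { intros f Hf x Hx eps He. destruct (Hf x Hx eps He) as [a [Ha Ha']].
    exists a; split; [lra|]. intros y Hy Hy'. apply (Ha' y). split; auto. }
  assert (Xc : forall x, continuity_pt X x) by (apply relcont_clamp_all; auto).
  assert (Dc : forall x, continuity_pt D x) by (apply relcont_clamp_all; auto).
  assert (Xd : forall x, 0 < x < 2 * PI -> derivable_pt_lim X x (D x)).
  { intros x Hx. unfold D. rewrite clamp_id by lra.
    apply dpl_local with xi (Rmin x (2 * PI - x)); [apply Rmin_pos; lra| |apply hxd; auto].
    intros y Hy. generalize (Rmin_l x (2 * PI - x)) (Rmin_r x (2 * PI - x)); intros.
    apply Rabs_def2 in Hy. unfold X. rewrite clamp_id; auto; lra. }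
  assert (Xinc : forall x y, 0 <= x <= 2 * PI -> 0 <= y <= 2 * PI -> x < y -> X x < X y).
  { intros x y Hx Hy Hxy. unfold X. rewrite !clamp_id by auto. apply hinc; auto. }
  assert (Xper : X (2 * PI) = X 0 + 2 * PI).
  { unfold X. rewrite !clamp_id by lra. auto. }
  assert (KE : forall th ph, 0 <= th <= 2 * PI -> 0 <= ph <= 2 * PI ->
     kernel5p3 xi dxi th ph = kernel5p3 X D th ph).
  { intros th ph Ht Hp. unfold kernel5p3, X, D. rewrite !clamp_id by auto. reflexivity. }
  assert (XE : forall th, 0 <= th <= 2 * PI -> X th = xi th).
  { intros th Ht. unfold X. rewrite clamp_id; auto. }
  set (I := Iv X D Xc Dc Xd Xper).
  assert (prI := Iv_int X D Xc Dc Xd Xper).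
  exists I, (RiemannInt prI). split; [|split; [|split]].
  - intros ph Hp. assert (pr := ker_int X D Xc Dc Xd Xper ph Hp).
    assert (pr' : Riemann_integrable (fun theta => kernel5p3 xi dxi theta ph) 0 (2 * PI)).
    { apply Riemann_integrable_ext with (f := fun th => kernel5p3 X D th ph); auto.
      intros x Hx. rewrite Rmin_left, Rmax_right in Hx by lra. symmetry; apply KE; auto. }
    exists pr'. unfold I. rewrite (Iv_eq X D Xc Dc Xd Xper ph pr Hp).
    apply RiemannInt_P18; [lra|]. intros x Hx. apply KE; auto; lra.
  - exists prI; reflexivity.
  - apply Rle_trans with (0 * (2 * PI - 0)); [lra|]. apply RI_ge_const; [lra|].
    intros x Hx. apply (Iv_nn X D Xc Dc Xd Xinc Xper); auto.
  - split.
    + intro HJ. destruct (Rle_lt_or_eq_dec 0 (I PI)) as [Hlt|Heq].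
      { apply (Iv_nn X D Xc Dc Xd Xinc Xper). split; lra. }
      * exfalso. assert (0 < RiemannInt prI); [|lra].
        apply RI_pos_pt with PI; auto; [split; lra| | apply Iv_cont; split; lra].
        intros x Hx. apply (Iv_nn X D Xc Dc Xd Xinc Xper); auto.
      * destruct (Iv_zero_lin X D Xc Dc Xd Xinc Xper (eq_sym Heq)) as [c Hc].
        exists c. intros th Ht. rewrite <- XE by auto. apply Hc; auto.
    + intros [c Hc].
      assert (Hc' : forall th, 0 <= th <= 2 * PI -> X th = th + c).
      { intros th Ht. rewrite XE by auto. apply Hc; auto. }
      assert (Hb : Rabs (RiemannInt prI) <= 0 * (2 * PI - 0)).
      { apply RI_abs_le; [lra|]. intros x Hx. unfold I. rewrite (lin_Iv X D Xc Dc Xd Xper c Hc') by lra.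
        rewrite Rabs_R0; lra. }
      rewrite Rmult_0_l in Hb. generalize (Rabs_pos (RiemannInt prI)); intro HH.
      revert Hb HH; unfold Rabs; destruct Rcase_abs; intros; lra.
Qed.
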